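(* Let $U$ be the $\mathrm{mdG}(q)$ solution of $\dot u=f(u,t)$, $U(0^-)=u_0$, with residual $R_i(U,t)=\dot U_i(t)-f_i(U(t),t)$, and let $\tilde R$ be the local $L^2$-projection of $R$ onto the trial space, i.e. $\tilde R_i(U,\cdot)|_{I_{ij}}$ is the $L^2(I_{ij})$-orthogonal projection of $R_i(U,\cdot)|_{I_{ij}}$ onto the polynomials of degree $\le q_{ij}$ on $I_{ij}$, $j=1,\dots,M_i$, $i=1,\dots,N$. Then every $\tilde R_i(U,\cdot)|_{I_{ij}}$ is a (possibly zero) scalar multiple of the Radau polynomial of degree $q_{ij}$ on $I_{ij}$, i.e. of $t\mapsto Q_{q_{ij}}\big(2(t-t_{i,j-1})/k_{ij}-1\big)$.
   Context: $f$ is bounded and Lipschitz in $u$. For each component $i$: partition $0=t_{i0}<\dots<t_{iM_i}=T$, $I_{ij}=(t_{i,j-1},t_{ij}]$, $k_{ij}=t_{ij}-t_{i,j-1}$, degrees $q_{ij}\ge1$. The $\mathrm{mdG}(q)$ solution $U$: $U_i|_{I_{ij}}$ a polynomial of degree $\le q_{ij}$, $U_i(0^-)=u_i(0)$, and $[U_i]_{i,j-1}v(t_{i,j-1}^+)+\int_{I_{ij}}\dot U_iv\,dt=\int_{I_{ij}}f_i(U,t)v\,dt$ for all polynomials $v$ of degree $\le q_{ij}$ on $I_{ij}$, with $[U_i]_{ij}=U_i(t_{ij}^+)-U_i(t_{ij}^-)$ (exact integration). With $P_q$ the Legendre polynomial of degree $q$ on $[-1,1]$, the Radau polynomial is $Q_q(x)=(P_q(x)+P_{q+1}(x))/(x+1)$.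 *)

(* Defs.v *)
From HB Require Import structures.
From mathcomp Require Import all_boot all_order all_algebra.
From mathcomp Require Import all_classical all_reals all_analysis.
Set Implicit Arguments. Unset Strict Implicit. Unset Printing Implicit Defensive.
Import Order.TTheory GRing.Theory Num.Theory.
Import numFieldNormedType.Exports.
Local Open Scope classical_set_scope.
Local Open Scope ring_scope.

(* Legendre polynomials on [-1,1], via Bonnet's recursion
   P_0 = 1, P_1 = X, (n+2) P_{n+2} = (2n+3) X P_{n+1} - (n+1) P_n. *)
Fixpoint legendre_pair (R : fieldType) (n : nat) : {poly R} * {poly R} :=
  match n with
  | 0 => (1, 'X)
  | n'.+1 =>
      let: (p, p1) := legendre_pair R n' in
      (p1, (n'.+2)%:R^-1 *:
             ((n'.*2.+3)%:R *: ('X * p1) - (n'.+1)%:R *: p))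
  end.

Definition legendre (R : fieldType) (n : nat) : {poly R} := (legendre_pair R n).1.

(* Radau polynomial Q_q(x) = (P_q(x) + P_{q+1}(x)) / (x + 1)
   (exact polynomial division since P_q(-1) + P_{q+1}(-1) = 0). *)
Definition radau (R : fieldType) (q : nat) : {poly R} :=
  (legendre R q + legendre R q.+1) %/ ('X + 1).

Definition radau_on (R : fieldType) (q : nat) (a b : R) (t : R) : R :=
  (radau R q).[2 * (t - a) / (b - a) - 1].

Definition intI (R : realType) (a b : R) (g : R -> R) : R :=
  \int[@lebesgue_measure R]_(x in `]a, b]) g x.

(* Main.v *)
Require Import Defs.
From HB Require Import structures.
From mathcomp Require Import all_boot all_order all_algebra.
From mathcomp Require Import all_classical all_reals all_analysis.
From mathcomp Require Import ring lra zify.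
From Stdlib Require Import Lia.
Set Implicit Arguments. Unset Strict Implicit. Unset Printing Implicit Defensive.
Import Order.TTheory GRing.Theory Num.Theory.
Import numFieldNormedType.Exports.
Local Open Scope classical_set_scope.
Local Open Scope ring_scope.
Section Prim.
Variable R : realType.
Definition prim (p : {poly R}) : {poly R} :=
  \poly_(i < (size p).+1) (if i is k.+1 then p`_k / (k.+1)%:R else 0).

Lemma coef_prim p i : (prim p)`_i = if i is k.+1 then p`_k / (k.+1)%:R else 0.
Proof.
rewrite coef_poly; case: i => [|k]; first by case: ltnP.
case: ltnP => // H; rewrite nth_default ?mul0r //.
Qed.

Lemma prim_deriv p : (prim p)^`() = p.
Proof.
apply/polyP => i; rewrite coef_deriv coef_prim /= -(mulr_natr (p`_i / _)) mulfVK // pnatr_eq0.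
Qed.

Lemma prim_of_deriv p : prim (p^`()) = p - (p`_0)%:P.
Proof.
apply/polyP => i; rewrite coef_prim coefB coefC; case: i => [|k]; first by rewrite subrr.
rewrite coef_deriv subr0 -(mulr_natr p`_k.+1) mulfK // pnatr_eq0.
Qed.

Definition Phi (a b : R) (r : {poly R}) := (prim r).[b] - (prim r).[a].

Lemma Phi_deriv a b G : Phi a b (G^`()) = G.[b] - G.[a].
Proof. rewrite /Phi prim_of_deriv !hornerE; ring. Qed.

Lemma Phi_lin a b (c : R) r s : Phi a b (c *: r + s) = c * Phi a b r + Phi a b s.
Proof.
rewrite -{1}(prim_deriv r) -{1}(prim_deriv s) -derivZ -derivD Phi_deriv /Phi.
rewrite !hornerD !hornerZ; ring.
Qed.

Lemma Phi0 a b : Phi a b 0 = 0.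
Proof. by have := Phi_deriv a b 0; rewrite deriv0 !horner0 subrr. Qed.
Lemma PhiZ a b c r : Phi a b (c *: r) = c * Phi a b r.
Proof. by have := Phi_lin a b c r 0; rewrite !addr0 Phi0 addr0. Qed.
Lemma PhiD a b r s : Phi a b (r + s) = Phi a b r + Phi a b s.
Proof. by have := Phi_lin a b 1 r s; rewrite scale1r mul1r. Qed.
Lemma PhiN a b r : Phi a b (- r) = - Phi a b r.
Proof. by rewrite -scaleN1r PhiZ mulN1r. Qed.
Lemma PhiB a b r s : Phi a b (r - s) = Phi a b r - Phi a b s.
Proof. by rewrite PhiD PhiN. Qed.
Lemma PhiC a b c r : Phi a b (c%:P * r) = c * Phi a b r.
Proof. by rewrite mul_polyC PhiZ. Qed.

Lemma poly_int_cc a b r :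
  (@lebesgue_measure R).-integrable `[a, b] (EFin \o horner r).
Proof.
apply: continuous_compact_integrable; first exact: segment_compact.
by apply: continuous_subspaceT => x; exact: continuous_horner.
Qed.

Lemma poly_int_oc a b r :
  (@lebesgue_measure R).-integrable `]a, b] (EFin \o horner r).
Proof.
apply: (integrableS _ _ _ (poly_int_cc a b r)) => //.
by apply: subset_itv; rewrite bnd_simp.
Qed.

Lemma intI_poly a b r : a < b -> intI a b (fun t => r.[t]) = Phi a b r.
Proof.
move=> ab.
rewrite /intI Rintegral_itv_obnd_cbnd; last first.
  exact: poly_int_oc.
rewrite /Rintegral (@continuous_FTC2 _ _ (horner (prim r))) //=.
- by apply: continuous_subspaceT => x; exact: continuous_horner.
- split.
  + by move=> x _; exact: derivable_horner.
  + by apply: cvg_at_right_filter; exact: continuous_horner.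
  + by apply: cvg_at_left_filter; exact: continuous_horner.
- by move=> x _; rewrite -derivE prim_deriv.
Qed.
End Prim.

Section Leg.
Variable R : realType.
Notation P := (legendre R).

Lemma legendreSS n : P n.+2 =
  (n.+2)%:R^-1 *: ((n.*2.+3)%:R *: ('X * P n.+1) - (n.+1)%:R *: P n).
Proof. by rewrite /legendre /=; case: legendre_pair. Qed.

Lemma legendre0 : P 0 = 1. Proof. by []. Qed.
Lemma legendre1 : P 1 = 'X. Proof. by []. Qed.

Lemma natS2 n : (n.+2)%:R = n%:R + 2 :> R.
Proof. by rewrite -addn2 natrD. Qed.
Lemma natS1 n : (n.+1)%:R = n%:R + 1 :> R.
Proof. by rewrite -addn1 natrD. Qed.
Lemma natD3 n : (n.*2.+3)%:R = n%:R *+ 2 + 3 :> R.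
Proof. by rewrite -addn3 natrD -muln2 natrM mulr_natr. Qed.
Lemma n2_neq0 n : n%:R + 2 != 0 :> R.
Proof. by rewrite -natS2 pnatr_eq0. Qed.

Lemma legendreSS' n : ((n%:R + 2)%:P * P n.+2 : {poly R}) =
  (n%:R *+ 2 + 3)%:P * ('X * P n.+1) - (n%:R + 1)%:P * P n.
Proof.
rewrite legendreSS (natS2 n) (natD3 n) (natS1 n) -!mul_polyC !mulrA -polyCM mulfV ?n2_neq0 //.
by rewrite polyC1 mul1r.
Qed.

Definition W : {poly R} := 1 - 'X^2.

Ltac normC := rewrite ?(polyCD, polyCMn, polyC_natr, polyC1, polyCN, polyCM).

Lemma leg_inv n :
  W * (P n)^`() = (n%:R + 1)%:P * ('X * P n - P n.+1) /\
  W * (P n.+1)^`() = (n%:R + 1)%:P * (P n - 'X * P n.+1).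
Proof.
elim: n => [|n [I1 I2]].
  rewrite legendre0 legendre1 derivC derivX mulr0 mulr1 add0r polyC1 !mul1r subrr.
  by split => //; rewrite /W expr2 mulr1.
have E := legendreSS' n.
have nz : ((n%:R + 2)%:P : {poly R}) != 0 by rewrite polyC_eq0 n2_neq0.
have dE := congr1 deriv E.
rewrite !derivB !derivM !derivC !derivX !mul0r !add0r mul1r in dE.
rewrite (natS1 n).
move: nz; normC => nz.
move: E dE I1 I2; normC => E dE I1 I2.
set A := P n in E dE I1 I2 *; set B := P n.+1 in E dE I1 I2 *;
  set C := P n.+2 in E dE I1 I2 *.
set m : {poly R} := n%:R in E dE I1 I2 nz *.
have h1 : W * A^`() - (m + 1) * ('X * A - B) = 0 by rewrite I1 subrr.
have h2 : W * B^`() - (m + 1) * (A - 'X * B) = 0 by rewrite I2 subrr.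
have hE : (m + 2) * C - ((m *+ 2 + 3) * ('X * B) - (m + 1) * A) = 0
  by rewrite E subrr.
have hdE : (m + 2) * C^`() - ((m *+ 2 + 3) * (B + 'X * B^`()) - (m + 1) * A^`()) = 0
  by rewrite dE subrr.
split.
  apply: (mulfI nz); apply/eqP; rewrite -subr_eq0; apply/eqP.
  transitivity ((m + 2) * (W * B^`() - (m + 1) * (A - 'X * B))
     + (m + 2) * ((m + 2) * C - ((m *+ 2 + 3) * ('X * B) - (m + 1) * A))).
    ring.
  by rewrite h2 hE; ring.
apply: (mulfI nz); apply/eqP; rewrite -subr_eq0; apply/eqP.
transitivity (W * ((m + 2) * C^`() - ((m *+ 2 + 3) * (B + 'X * B^`()) - (m + 1) * A^`()))
   + (m *+ 2 + 3) * 'X * (W * B^`() - (m + 1) * (A - 'X * B))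
   - (m + 1) * (W * A^`() - (m + 1) * ('X * A - B))
   + (m + 2) * 'X * ((m + 2) * C - ((m *+ 2 + 3) * ('X * B) - (m + 1) * A))).
  rewrite /W; ring.
by rewrite h1 h2 hE hdE; ring.
Qed.

Lemma W_neq0 : W != 0.
Proof.
apply/eqP => /(congr1 (horner^~ 0)); rewrite /W /= !hornerE expr0n /= subr0.
by move/eqP; rewrite oner_eq0.
Qed.

Lemma leg_ode n : (W * (P n)^`())^`() = - (n%:R * (n%:R + 1))%:P * P n.
Proof.
have [I1 I2] := leg_inv n.
have dI1 : (W * (P n)^`())^`() =
    (n%:R + 1)%:P * (P n + 'X * (P n)^`() - (P n.+1)^`()).
  by rewrite I1 derivM derivC mul0r add0r derivB derivM derivX mul1r.
apply: (mulfI W_neq0); rewrite dI1.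
move: I1 I2; normC => I1 I2; normC.
set A := P n in I1 I2 *; set B := P n.+1 in I1 I2 *.
set m : {poly R} := n%:R in I1 I2 *.
have h1 : W * A^`() - (m + 1) * ('X * A - B) = 0 by rewrite I1 subrr.
have h2 : W * B^`() - (m + 1) * (A - 'X * B) = 0 by rewrite I2 subrr.
apply/eqP; rewrite -subr_eq0; apply/eqP.
transitivity ((m + 1) * 'X * (W * A^`() - (m + 1) * ('X * A - B))
  - (m + 1) * (W * B^`() - (m + 1) * (A - 'X * B))).
  rewrite /W; ring.
by rewrite h1 h2; ring.
Qed.

Lemma leg_sym p q : Phi (-1) 1 ((W * p^`())^`() * q) = Phi (-1) 1 ((W * q^`())^`() * p).
Proof.
apply/eqP; rewrite -subr_eq0 -PhiB; apply/eqP.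
have -> : (W * p^`())^`() * q - (W * q^`())^`() * p = (W * (p^`() * q - p * q^`()))^`().
  by rewrite !derivM !derivB !derivM; ring.
by rewrite Phi_deriv /W !hornerE; ring.
Qed.

Lemma leg_orth n k : n != k -> Phi (-1) 1 (P n * P k) = 0.
Proof.
move=> nk.
have := leg_sym (P n) (P k); rewrite !leg_ode -!polyCN -!mulrA !PhiC [P k * P n]mulrC.
move=> /eqP; rewrite -subr_eq0 -mulrBl mulf_eq0 => /orP[|/eqP//].
rewrite subr_eq0 eqr_opp -!natS1 -!natrM eqr_nat => /eqP h.
exfalso; move: nk => /eqP; apply; nia.
Qed.

Lemma leg_coef2 n :
  (0 < (P n)`_n /\ (forall j, (n < j)%N -> (P n)`_j = 0)) /\
  (0 < (P n.+1)`_n.+1 /\ (forall j, (n.+1 < j)%N -> (P n.+1)`_j = 0)).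
Proof.
elim: n => [|n [[a1 a2] [b1 b2]]].
  split; split.
  - by rewrite legendre0 coef1 ltr01.
  - by move=> [|j] // _; rewrite legendre0 coef1.
  - by rewrite legendre1 coefX ltr01.
  - by move=> [|[|j]] // _; rewrite legendre1 coefX.
split; first by [].
rewrite legendreSS; split.
  rewrite coefZ coefB !coefZ coefXM /= a2 // mulr0 subr0.
  by rewrite mulr_gt0 // ?invr_gt0 ?ltr0n // mulr_gt0 // ltr0n.
move=> [|j] hj //.
by rewrite coefZ coefB !coefZ coefXM /= a2 ?b2 // ?mulr0 ?subr0 ?mulr0 //; lia.
Qed.

Lemma leg_coef n : 0 < (P n)`_n /\ (forall j, (n < j)%N -> (P n)`_j = 0).
Proof. by have [] := leg_coef2 n. Qed.

Lemma leg_size n : size (P n) = n.+1.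
Proof.
have [h1 h2] := leg_coef n.
apply/eqP; rewrite eqn_leq; apply/andP; split.
  by apply/leq_sizeP => j hj; exact: h2.
rewrite ltnNge; apply/negP => /leq_sizeP /(_ n (leqnn n)) h.
by rewrite h ltxx in h1.
Qed.

Lemma leg_span n k (w : {poly R}) : (k <= n)%N -> (size w <= k)%N -> Phi (-1) 1 (P n * w) = 0.
Proof.
elim: k w => [|k IH] w kn sw.
  by move: sw; rewrite leqn0 size_poly_eq0 => /eqP ->; rewrite mulr0 Phi0.
have hk : (P k)`_k != 0 by have [h _] := leg_coef k; rewrite lt0r_neq0.
set c := w`_k / (P k)`_k.
have sw' : (size ((w - c *: P k)%R) <= k)%N.
  apply/leq_sizeP => j kj; rewrite coefB coefZ.
  move: kj; rewrite leq_eqVlt => /orP[/eqP <-|kj].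
    by rewrite /c mulfVK // subrr.
  have [_ h2] := leg_coef k; rewrite h2 // mulr0 subr0.
  by move/leq_sizeP: sw; apply.
have -> : w = c *: P k + (w - c *: P k) by rewrite addrC subrK.
rewrite mulrDr -scalerAr PhiD PhiZ.
have -> : Phi (-1) 1 (P n * P k) = 0 by apply: leg_orth; rewrite neq_ltn kn orbT.
by rewrite mulr0 add0r; apply: IH => //; exact: ltnW.
Qed.

Lemma leg_m1 n : (P n).[-1] + (P n.+1).[-1] = 0.
Proof.
have [I1 _] := leg_inv n.
have := congr1 (horner^~ (-1)) I1; rewrite /= /W !hornerE sqrrN expr1n subrr mul0r.
move=> /esym/eqP; rewrite mulf_eq0 -natS1 pnatr_eq0 /= => /eqP h.
lra.
Qed.

Lemma radau_mul q : radau R q * ('X + 1) = P q + P q.+1.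
Proof.
rewrite /radau divpK //.
have -> : ('X + 1 : {poly R}) = 'X - (-1)%:P by rewrite polyCN opprK polyC1.
by rewrite dvdp_XsubCl rootE hornerD leg_m1.
Qed.

Lemma X1_size : size ('X + 1 : {poly R}) = 2.
Proof. by rewrite -polyC1 size_XaddC. Qed.

Lemma radau_size q : size (radau R q) = q.+1.
Proof.
have hs : size (P q + P q.+1) = q.+2 by rewrite addrC size_polyDl !leg_size.
have nz1 : ('X + 1 : {poly R}) != 0 by rewrite -size_poly_eq0 X1_size.
have nz : radau R q != 0.
  by apply/eqP => h; move: hs; rewrite -radau_mul h mul0r size_poly0.
by move: hs; rewrite -radau_mul size_mul // X1_size addn2 /= => -[].
Qed.

Lemma radau_orth q (w : {poly R}) : (size w <= q)%N -> Phi (-1) 1 (radau R q * ('X + 1) * w) = 0.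
Proof.
move=> sw; rewrite radau_mul mulrDl PhiD.
by rewrite (@leg_span q q) // (@leg_span q.+1 q) // addr0.
Qed.
End Leg.

Section Trans.
Variable R : realType.

Lemma poly_ext_itv (p : {poly R}) (a b : R) :
  a < b -> (forall x, a < x < b -> p.[x] = 0) -> p = 0.
Proof.
move=> ab h; apply/eqP; apply/negPn/negP => pn0.
have ba : 0 < b - a by rewrite subr_gt0.
pose f := fun i : nat => a + (b - a) / (i.+2)%:R.
have fin : forall i, a < f i < b.
  move=> i; rewrite /f.
  have h1 : 0 < (b - a) / (i.+2)%:R by rewrite divr_gt0 // ltr0n.
  have h2 : (b - a) / (i.+2)%:R < b - a.
    by rewrite ltr_pdivrMr ?ltr0n // ltr_pMr // ltr1n.
  move: h1 h2; set t := (b - a) / _ => h1 h2.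
  apply/andP; split; lra.
have inj : injective f.
  move=> i j; rewrite /f => /addrI /(mulfI (lt0r_neq0 ba)) /invr_inj /eqP.
  by rewrite eqr_nat => /eqP [].
have := @max_poly_roots _ p [seq f i | i <- iota 0 (size p)] pn0.
rewrite size_map size_iota ltnn map_inj_uniq // iota_uniq => H.
suff : false by [].
apply: H => //; apply/allP => x /mapP [i _ ->]; rewrite rootE h //; exact: fin.
Qed.

Lemma poly_eq_ext (p q : {poly R}) : (forall x, p.[x] = q.[x]) -> p = q.
Proof.
move=> h; apply/eqP; rewrite -subr_eq0; apply/eqP.
apply: (@poly_ext_itv _ 0 1 ltr01).
by move=> x _; rewrite hornerD hornerN h subrr.
Qed.

Lemma Phi_sq (a b : R) (s : {poly R}) : a < b -> Phi a b (s * s) = 0 -> s = 0.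
Proof.
move=> ab h.
set F := prim (s * s).
have dF : forall x, ((horner F)^`())%classic x = (s * s).[x].
  by move=> x; rewrite -derivE prim_deriv.
have mono : forall x y, a <= x -> x <= y -> y <= b -> F.[x] <= F.[y].
  apply: (@ger0_derive1_ndecr _ (horner F) a b).
  - by move=> x _; exact: derivable_horner.
  - by move=> x _; rewrite dF hornerM -expr2 sqr_ge0.
  - by apply: continuous_subspaceT => x; exact: continuous_horner.
have eq0 : forall x, a < x < b -> (F - (F.[a])%:P).[x] = 0.
  move=> x /andP[ax xb]; rewrite hornerD hornerN hornerC.
  have h1 := mono a x (lexx a) (ltW ax) (ltW xb).
  have h2 := mono x b (ltW ax) (ltW xb) (lexx b).
  move: h; rewrite /Phi -/F => h; lra.
have := poly_ext_itv ab eq0 => /(congr1 deriv).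
rewrite derivB derivC subr0 prim_deriv deriv0 => /eqP.
by rewrite mulf_eq0 orbb => /eqP.
Qed.

Section Int.
Variables (a b : R) (q : nat).
Hypothesis ab : a < b.

Definition alpha := 2 / (b - a).
Lemma ba_neq0 : b - a != 0. Proof. by rewrite subr_eq0 gt_eqF. Qed.
Lemma alpha_neq0 : alpha != 0.
Proof. by rewrite /alpha mulf_neq0 // ?invr_eq0 ?ba_neq0 // pnatr_eq0. Qed.

Definition Lp : {poly R} := alpha%:P * ('X - (a + alpha^-1)%:P).
Definition Mp : {poly R} := alpha^-1%:P * ('X + (1 + alpha * a)%:P).

Lemma Lp_eval t : Lp.[t] = 2 * (t - a) / (b - a) - 1.
Proof.
have := ba_neq0; have := alpha_neq0; rewrite /Lp /alpha !(hornerCM, hornerM, hornerD, hornerN, hornerC, hornerX) => h1 h2.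
by field; rewrite h2 /=.
Qed.

Lemma Lp_size : size Lp = 2.
Proof. by rewrite /Lp size_Cmul ?alpha_neq0 // size_XsubC. Qed.

Lemma Mp_size : size Mp = 2.
Proof. by rewrite /Mp size_Cmul ?invr_eq0 ?alpha_neq0 // size_XaddC. Qed.

Lemma Mp_Lp : Mp \Po Lp = 'X.
Proof.
apply: poly_eq_ext => x; rewrite horner_comp /Mp /Lp !(hornerCM, hornerM, hornerD, hornerN, hornerC, hornerX).
have := alpha_neq0 => h; field; exact: h.
Qed.

Lemma X1_Lp : ('X + 1) \Po Lp = alpha%:P * ('X - a%:P).
Proof.
apply: poly_eq_ext => x; rewrite horner_comp /Lp !(hornerCM, hornerM, hornerD, hornerN, hornerC, hornerX).
have := alpha_neq0 => h; field; exact: h.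
Qed.

Lemma Phi_comp r : Phi a b (r \Po Lp) = alpha^-1 * Phi (-1) 1 r.
Proof.
have dG : (prim r \Po Lp)^`() = (r \Po Lp) * alpha%:P.
  rewrite deriv_comp prim_deriv; congr (_ * _).
  by rewrite /Lp derivM derivC mul0r add0r derivB derivX derivC subr0 mulr1.
have -> : r \Po Lp = alpha^-1%:P * (prim r \Po Lp)^`().
  by rewrite dG mulrC -mulrA -polyCM mulfV ?alpha_neq0 // polyC1 mulr1.
rewrite PhiC Phi_deriv !horner_comp !Lp_eval; congr (_ * (_ - _)); rewrite /Phi.
  have := ba_neq0 => h; congr (_.[_]); field; exact: h.
have := ba_neq0 => h; congr (_.[_]); field; exact: h.
Qed.

Definition rho : {poly R} := radau R q \Po Lp.

Lemma rho_size : size rho = q.+1.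
Proof. by rewrite /rho size_comp_poly2 ?Lp_size // radau_size. Qed.

Lemma rho_orth (w : {poly R}) : (size w <= q)%N ->
  Phi a b (rho * ('X - a%:P) * w) = 0.
Proof.
move=> sw.
set w' := w \Po Mp.
have ew : w = w' \Po Lp by rewrite /w' -comp_polyA Mp_Lp comp_polyXr.
have sw' : (size w' <= q)%N by rewrite /w' size_comp_poly2 ?Mp_size.
have -> : rho * ('X - a%:P) * w =
    alpha^-1%:P * ((radau R q * ('X + 1) * w') \Po Lp).
  rewrite !comp_polyM X1_Lp -ew /rho.
  have e : alpha^-1%:P * alpha%:P = 1 :> {poly R}.
    by rewrite -polyCM mulVf ?alpha_neq0 // polyC1.
  set r0 := radau R q \Po Lp.
  transitivity ((alpha^-1%:P * alpha%:P) * (r0 * ('X - a%:P) * w)).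
    by rewrite e mul1r.
  ring.
by rewrite PhiC Phi_comp radau_orth // !mulr0.
Qed.

Definition inS (r : {poly R}) := (size r <= q.+1)%N /\
  forall w : {poly R}, (size w <= q)%N -> Phi a b (r * ('X - a%:P) * w) = 0.

Lemma S_zero r : inS r -> r.[a] = 0 -> r = 0.
Proof.
move=> [sr hr] ra.
have dv : ('X - a%:P) %| r by rewrite dvdp_XsubCl rootE ra.
set w := r %/ ('X - a%:P).
have ew : r = w * ('X - a%:P) by rewrite /w divpK.
have sw : (size w <= q)%N.
  rewrite /w size_divp; last by rewrite -size_poly_eq0 size_XsubC.
  by rewrite size_XsubC /= subn1; move: sr; case: (size r) => //= n; rewrite ltnS.
apply: (Phi_sq ab).
have e : r * r = r * ('X - a%:P) * w by rewrite {2}ew; ring.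
by rewrite e; exact: hr.
Qed.

Lemma S_unique p r : inS p -> inS r -> r != 0 -> exists c, p = c *: r.
Proof.
move=> [sp hp] [sr hr] rn0.
have ra : r.[a] != 0.
  by apply/eqP => ra; move/eqP: rn0; apply; apply: S_zero.
exists (p.[a] / r.[a]); apply/eqP; rewrite -subr_eq0; apply/eqP.
apply: S_zero.
  split.
    apply/leq_sizeP => j hj; rewrite coefB coefZ.
    move/leq_sizeP: sp => /(_ j hj) ->; move/leq_sizeP: sr => /(_ j hj) ->.
    by rewrite mulr0 subr0.
  move=> w sw; rewrite mulrBl mulrBl -!scalerAl PhiB PhiZ hp // hr //.
  by rewrite mulr0 subr0.
by rewrite hornerD hornerN hornerZ mulfVK // subrr.
Qed.

Lemma final_dim p : inS p -> exists c, forall t, p.[t] = c * radau_on q a b t.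
Proof.
move=> hp.
have rS : inS rho by split; [rewrite rho_size | exact: rho_orth].
have rn0 : rho != 0 by rewrite -size_poly_eq0 rho_size.
have [c ->] := S_unique hp rS rn0.
by exists c => t; rewrite hornerZ /rho horner_comp Lp_eval.
Qed.
End Int.
End Trans.

Lemma entry_le (R : realType) N (x : 'rV[R]_N) i : `|x ord0 i| <= `|x|.
Proof.
rewrite -[`|x|]/(mx_norm x) mx_normrE.
exact: (le_bigmax _ _ (ord0, i)).
Qed.

Lemma intIB (R : realType) (a b : R) (F G : R -> R) :
  (@lebesgue_measure R).-integrable `]a, b] (EFin \o F) ->
  (@lebesgue_measure R).-integrable `]a, b] (EFin \o G) ->
  intI a b (fun t => F t - G t) = intI a b F - intI a b G.
Proof. by move=> hF hG; rewrite /intI RintegralB //; exact: measurable_itv. Qed.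

Lemma intI_ext (R : realType) (a b : R) (F G : R -> R) :
  (forall t, F t = G t) -> intI a b F = intI a b G.
Proof. by move=> h; rewrite /intI; apply: eq_Rintegral => t _; exact: h. Qed.

Unset Implicit Arguments.

Theorem lemma6p11 (R : realType) (N : nat) (T : R)
    (f : 'rV[R]_N -> R -> 'rV[R]_N) (u0 : 'rV[R]_N)
    (M : 'I_N -> nat) (tp : 'I_N -> nat -> R) (q : 'I_N -> nat -> nat)
    (Pol : 'I_N -> nat -> {poly R}) (U : 'I_N -> R -> R) :
  0 < T ->
  (* f bounded and Lipschitz in u *)
  (exists C : R, forall u t, 0 <= t <= T -> `|f u t| <= C) ->
  (exists L : R, forall u v t, 0 <= t <= T -> `|f u t - f v t| <= L * `|u - v|) ->
  (* partitions *)
  (forall i, (0 < M i)%N) ->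
  (forall i, tp i 0%N = 0) ->
  (forall i, tp i (M i) = T) ->
  (forall i j, (j < M i)%N -> tp i j < tp i j.+1) ->
  (forall i j, (0 < j <= M i)%N -> (1 <= q i j)%N) ->
  (* U_i on I_ij is the polynomial Pol i j of degree <= q_ij *)
  (forall i j, (0 < j <= M i)%N -> (size (Pol i j) <= (q i j).+1)%N) ->
  (forall i j, (0 < j <= M i)%N ->
     forall t, tp i j.-1 < t <= tp i j -> U i t = (Pol i j).[t]) ->
  (* well-definedness of the integrals: t |-> f_i(U(t),t) is measurable *)
  (forall i, measurable_fun `]0, T] (fun t => f (\row_k U k t) t ord0 i)) ->
  (* mdG(q) equations, with U_i(0^-) = u0_i *)
  (forall i j, (0 < j <= M i)%N ->
     forall v : {poly R}, (size v <= (q i j).+1)%N ->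
       ((Pol i j).[tp i j.-1]
          - (if j == 1%N then u0 ord0 i else (Pol i j.-1).[tp i j.-1]))
         * v.[tp i j.-1]
       + intI (tp i j.-1) (tp i j) (fun t => ((Pol i j)^`()).[t] * v.[t])
       = intI (tp i j.-1) (tp i j)
           (fun t => f (\row_k U k t) t ord0 i * v.[t])) ->
  (* conclusion: the L2(I_ij)-projection of the residual onto polynomials of
     degree <= q_ij is a scalar multiple of the Radau polynomial on I_ij *)
  forall i j, (0 < j <= M i)%N ->
    forall p : {poly R}, (size p <= (q i j).+1)%N ->
      (forall v : {poly R}, (size v <= (q i j).+1)%N ->
         intI (tp i j.-1) (tp i j)
           (fun t => (((Pol i j)^`()).[t] - f (\row_k U k t) t ord0 i - p.[t])
                     * v.[t]) = 0) ->
      exists c : R, forall t, tp i j.-1 < t <= tp i j ->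
        p.[t] = c * radau_on (q i j) (tp i j.-1) (tp i j) t.
Proof.
move=> T0 [C hC] _ M0 tp0 tpM tpinc q1 sizePol UPol mf mdG i j hj p sp hproj.
have j0 : (0 < j)%N by case/andP: hj.
have jM : (j <= M i)%N by case/andP: hj.
have mono : forall k l, (k <= l)%N -> (l <= M i)%N -> tp i k <= tp i l.
  move=> k; elim => [|l IH] kl lM.
    by move: kl; rewrite leqn0 => /eqP ->.
  move: kl; rewrite leq_eqVlt => /orP[/eqP ->|kl]; first exact: lexx.
  exact: le_trans (IH kl (ltnW lM)) (ltW (tpinc i l lM)).
have ab : tp i j.-1 < tp i j.
  have := tpinc i j.-1; rewrite (prednK j0); apply; lia.
have a0 : 0 <= tp i j.-1 by rewrite -(tp0 i); apply: mono => //; lia.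
have bT : tp i j <= T by rewrite -(tpM i); apply: mono.
pose g := fun t => f (\row_k U k t) t ord0 i.
have gbd : forall t, tp i j.-1 < t <= tp i j -> `|g t| <= C.
  move=> t /andP[ta tb]; apply: le_trans (entry_le _ _) (hC _ _ _).
  by apply/andP; split; lra.
have mg : measurable_fun `]tp i j.-1, tp i j] g.
  apply: (measurable_funS _ _ (mf i)); first exact: measurable_itv.
  by apply: subset_itv; rewrite bnd_simp.
have gvint : forall v : {poly R},
    (@lebesgue_measure R).-integrable `]tp i j.-1, tp i j]
      (EFin \o (fun t => g t * v.[t])).
  move=> v; apply: measurable_bounded_integrable.
  - exact: measurable_itv.
  - rewrite [X in (X < _)%E](lebesgue_measure_itv `]tp i j.-1, tp i j]) /=.
    by rewrite lte_fin ab -EFinD ltry.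
  - apply: measurable_realfun.measurable_funM; [exact: mg | exact: measurable_poly].
  have cv : {within `[tp i j.-1, tp i j], continuous (horner v)}.
    by apply: continuous_subspaceT => x; exact: continuous_horner.
  have cpt : compact `[tp i j.-1, tp i j] by exact: segment_compact.
  have /compact_bounded[B [_ hB]] := continuous_compact cv cpt.
  exists (`|C| * (`|B| + 1)); split; first exact: num_real.
  move=> x hx y /=; rewrite in_itv /= => /andP[ay yb].
  have hBB : B < `|B| + 1 by rewrite (le_lt_trans (ler_norm B)) // ltrDl ltr01.
  have hv : `|v.[y]| <= `|B| + 1.
    apply: (hB _ hBB); exists y => //=; rewrite in_itv /=; apply/andP; split => //.
    exact: ltW.
  rewrite normrM; apply: le_trans (ltW hx).
  apply: ler_pM => //.
  apply: le_trans (ler_norm C); apply: gbd; by rewrite ay yb.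
have pvint : forall r v : {poly R},
    (@lebesgue_measure R).-integrable `]tp i j.-1, tp i j]
      (EFin \o (fun t => r.[t] * v.[t])).
  move=> r v; rewrite (_ : (fun t => r.[t] * v.[t]) = horner (r * v)).
    exact: poly_int_oc.
  by apply/funext => t; rewrite hornerM.
have key : inS (tp i j.-1) (tp i j) (q i j) p.
  split => // w sw.
  pose v := ('X - (tp i j.-1)%:P) * w.
  have sv : (size v <= (q i j).+1)%N.
    by apply: leq_trans (size_polyMleq _ _) _; rewrite size_XsubC.
  have va : v.[tp i j.-1] = 0.
    by rewrite /v hornerM hornerD hornerN hornerX hornerC subrr mul0r.
  have E1 := mdG i j hj v sv; rewrite va mulr0 add0r in E1.
  have E2 := hproj v sv.
  rewrite -mulrA -/v -(intI_poly _ ab).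
  rewrite (_ : (fun t => (p * v).[t]) = (fun t => p.[t] * v.[t])); last first.
    by apply/funext => t; rewrite hornerM.
  rewrite (@intI_ext _ _ _ _ (fun t => ((Pol i j)^`().[t] * v.[t]
        - g t * v.[t]) - p.[t] * v.[t])) in E2; last first.
    by move=> t; rewrite /g; ring.
  have i1 : (@lebesgue_measure R).-integrable `]tp i j.-1, tp i j]
      (EFin \o (fun t => (Pol i j)^`().[t] * v.[t] - g t * v.[t])).
    apply: eq_integrable; first exact: measurable_itv.
    2: { apply: integrableB.
         - exact: measurable_itv.
         - exact: (pvint (Pol i j)^`() v).
         - exact: (gvint v). }
    by move=> t _.
  rewrite (intIB i1 (pvint p v)) (intIB (pvint _ v) (gvint v)) in E2.
  rewrite /g in E2; lra.
have [c hc] := final_dim ab key.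
by exists c => t _; exact: hc.
Qed.
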